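(* Let $\delta:\,]0,+\infty[\to\mathbb R$ be nonnegative, bounded and continuously differentiable, and let $r:\,]\alpha,\omega[\to\,]0,+\infty[$ be a solution of $\ddot r+\delta(r)\dot r=-1/r^2$ which is maximal both to the left and to the right. Let $h(t)=\frac12\dot r(t)^2-\frac1{r(t)}$ (a nonincreasing function). If $\alpha>-\infty$, then: (i) $\lim_{t\downarrow\alpha}r(t)=0$; (ii) $h(\alpha):=\lim_{t\downarrow\alpha}h(t)<+\infty$; (iii) $\lim_{t\downarrow\alpha}\dfrac{r(t)}{(t-\alpha)^{2/3}}=\sqrt[3]{9/2}$. *)

(* Defs.v *)
From Stdlib Require Import Reals.
From Coquelicot Require Import Coquelicot.
Open Scope R_scope.

Definition is_sol (delta : R -> R) (a b : Rbar) (r : R -> R) : Prop :=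
  forall t : R, Rbar_lt a t -> Rbar_lt t b ->
    0 < r t /\ ex_derive r t /\ ex_derive (Derive r) t /\
    Derive (Derive r) t + delta (r t) * Derive r t = - 1 / (r t) ^ 2.

Definition maximal_left (delta : R -> R) (a b : Rbar) (r : R -> R) : Prop :=
  forall (a' : Rbar) (s : R -> R), Rbar_lt a' a -> is_sol delta a' b s ->
    (forall t : R, Rbar_lt a t -> Rbar_lt t b -> s t = r t) -> False.

Definition maximal_right (delta : R -> R) (a b : Rbar) (r : R -> R) : Prop :=
  forall (b' : Rbar) (s : R -> R), Rbar_lt b b' -> is_sol delta a b' s ->
    (forall t : R, Rbar_lt a t -> Rbar_lt t b -> s t = r t) -> False.

Definition energy (r : R -> R) (t : R) : R := / 2 * (Derive r t) ^ 2 - / r t.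

(* Main.v *)
Require Import Defs.
From Stdlib Require Import Reals Lra Lia Classical.
From Coquelicot Require Import Coquelicot.
Open Scope R_scope.

Lemma cont_eps (f : R -> R) x :
  (forall eps, 0 < eps -> exists d, 0 < d /\ forall y, Rabs (y - x) < d -> Rabs (f y - f x) < eps) ->
  continuous f x.
Proof.
  intros H. apply filterlim_locally. intros [e He]. simpl.
  destruct (H e He) as [d [Hd Hy]].
  exists (mkposreal d Hd). intros y Hb. apply Hy. exact Hb.
Qed.

Lemma cont_eps_inv (f : R -> R) x : continuous f x ->
  forall eps, 0 < eps -> exists d, 0 < d /\ forall y, Rabs (y - x) < d -> Rabs (f y - f x) < eps.
Proof.
  intros H e He. destruct (proj1 (filterlim_locally f (f x)) H (mkposreal e He)) as [[d Hd] Hy].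
  exists d. split; [exact Hd|]. intros y Hy'. apply (Hy y). exact Hy'.
Qed.

Lemma nonincr (f df : R -> R) a b :
  (forall x, a < x < b -> is_derive f x (df x)) -> (forall x, a < x < b -> df x <= 0) ->
  forall x y, a < x -> x <= y -> y < b -> f y <= f x.
Proof.
  intros Hd Hn x y Hx Hxy Hy. destruct (Req_dec x y) as [->|Hne]; [lra|].
  destruct (MVT_gen f x y df) as [c [Hc Heq]].
  - intros z Hz. rewrite Rmin_left in Hz by lra. rewrite Rmax_right in Hz by lra. apply Hd. lra.
  - intros z Hz. rewrite Rmin_left in Hz by lra. rewrite Rmax_right in Hz by lra.
    apply continuity_pt_filterlim. apply (ex_derive_continuous (K:=R_AbsRing) (V:=R_NormedModule) f). eexists. apply Hd. lra.
  - rewrite Rmin_left in Hc by lra. rewrite Rmax_right in Hc by lra.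
    assert (df c <= 0) by (apply Hn; lra). nra.
Qed.

Lemma abs_RInt_gen (f : R -> R) a b M : ex_RInt f a b ->
  (forall t, Rmin a b <= t <= Rmax a b -> Rabs (f t) <= M) ->
  Rabs (RInt f a b) <= Rabs (b - a) * M.
Proof.
  intros He Hb. destruct (Rle_dec a b) as [Hab|Hab].
  - rewrite (Rabs_right (b - a)) by lra. apply abs_RInt_le_const; auto.
    intros t Ht. apply Hb. rewrite Rmin_left, Rmax_right; lra.
  - assert (He' : ex_RInt f b a) by (apply ex_RInt_swap; auto).
    rewrite <- (opp_RInt_swap f b a He'). unfold opp; simpl. rewrite Rabs_Ropp.
    rewrite (Rabs_left (b - a)) by lra. replace (- (b - a)) with (a - b) by ring.
    apply abs_RInt_le_const; [lra| auto |].
    intros t Ht. apply Hb. rewrite Rmin_right, Rmax_left; lra.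
Qed.

Lemma half_pow_pos n : 0 < (/2)^n.
Proof. apply pow_lt. lra. Qed.

Lemma half_pow_S n : (/2)^(S n) = /2 * (/2)^n.
Proof. reflexivity. Qed.

Lemma half_pow_small K e : 0 < e -> exists N, forall n, (n >= N)%nat -> K * (/2)^n < e.
Proof.
  intros He. destruct (Rle_lt_dec K 0) as [HK|HK].
  - exists 0%nat. intros n _. pose proof (half_pow_pos n). nra.
  - destruct (pow_lt_1_zero (/2)) with (y := e / K) as [N HN].
    + rewrite Rabs_right; lra.
    + apply Rdiv_lt_0_compat; lra.
    + exists N. intros n Hn. specialize (HN n Hn). rewrite Rabs_right in HN.
      * apply Rmult_lt_compat_l with (r := K) in HN; [|lra].
        replace (K * (e / K)) with e in HN by (field; lra). lra.
      * pose proof (half_pow_pos n). lra.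
Qed.

Lemma geo_cauchy (u : nat -> R) K : (forall n, Rabs (u (S n) - u n) <= K * (/2)^n) ->
  forall n, Rabs (Lim_seq u - u n) <= 2*K*(/2)^n.
Proof.
  intros Hu.
  assert (HK0 : 0 <= K).
  { pose proof (Hu 0%nat). pose proof (Rabs_pos (u 1%nat - u 0%nat)). simpl in *. lra. }
  assert (H1 : forall n k, Rabs (u (k + n)%nat - u n) <= 2*K*(/2)^n - 2*K*(/2)^(k+n)).
  { intros n k. induction k.
    - simpl. rewrite Rminus_eq_0, Rabs_R0. lra.
    - replace (S k + n)%nat with (S (k + n)) by lia.
      eapply Rle_trans. 
      { replace (u (S (k+n)) - u n) with ((u (S (k+n)) - u (k+n)%nat) + (u (k+n)%nat - u n)) by ring.
        apply Rabs_triang. }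
      pose proof (Hu (k+n)%nat). rewrite half_pow_S. lra. }
  assert (Hc : ex_finite_lim_seq u).
  { apply ex_lim_seq_cauchy_corr. intros [e He]. simpl.
    destruct (half_pow_small (4*Rabs K) e He) as [N HN].
    exists N. intros n m Hn Hm.
    assert (HA : forall k, (N <= k)%nat -> Rabs (u k - u N) <= 2*Rabs K*(/2)^N).
    { intros k Hk. replace k with (k - N + N)%nat by lia. eapply Rle_trans; [apply H1|].
      pose proof (half_pow_pos (k - N + N)). pose proof (half_pow_pos N).
      rewrite (Rabs_right K) by lra. nra. }
    specialize (HN N (le_n _)).
    replace (u n - u m) with ((u n - u N) - (u m - u N)) by ring.
    eapply Rle_lt_trans; [apply Rabs_triang|]. rewrite Rabs_Ropp.
    pose proof (HA n Hn). pose proof (HA m Hm). lra. }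
  intros n.
  pose proof (Lim_seq_correct' u Hc) as Hl.
  assert (Hl' : is_lim_seq (fun k => Rabs (u (k + n)%nat - u n)) (Rabs (Lim_seq u - u n))).
  { apply (is_lim_seq_incr_n (fun k => Rabs (u k - u n)) n (Rabs (Lim_seq u - u n))).
    apply (is_lim_seq_abs (fun k => u k - u n) (Lim_seq u - u n)).
    apply is_lim_seq_minus'; auto. apply is_lim_seq_const. }
  assert (Rbar_le (Rabs (Lim_seq u - u n)) (2*K*(/2)^n)).
  { eapply is_lim_seq_le; [|exact Hl'|apply is_lim_seq_const].
    intros k. pose proof (H1 n k). pose proof (half_pow_pos (k+n)).
    nra. }
  simpl in H. exact H.
Qed.

Definition clampT (a b t : R) := Rmax a (Rmin t b).

Lemma clampT_in a b t : a <= b -> a <= clampT a b t <= b.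
Proof. intros. unfold clampT, Rmax, Rmin. repeat destruct Rle_dec; lra. Qed.

Lemma clampT_id a b t : a <= t <= b -> clampT a b t = t.
Proof. intros. unfold clampT, Rmax, Rmin. repeat destruct Rle_dec; lra. Qed.

Lemma clampT_lip a b t u : a <= b -> Rabs (clampT a b t - clampT a b u) <= Rabs (t - u).
Proof.
  intros. unfold clampT, Rmax, Rmin, Rabs. repeat destruct Rle_dec; repeat destruct Rcase_abs; lra.
Qed.

Lemma lip_cont (f : R -> R) K x : 0 <= K -> (forall y, Rabs (f y - f x) <= K * Rabs (y - x)) -> continuous f x.
Proof.
  intros HK H. apply cont_eps. intros e He. exists (e / (K + 1)). split.
  - apply Rdiv_lt_0_compat; lra.
  - intros y Hy. eapply Rle_lt_trans; [apply H|].
    apply Rle_lt_trans with ((K+1) * Rabs (y - x)).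
    + pose proof (Rabs_pos (y - x)). nra.
    + apply Rmult_lt_compat_l with (r := K + 1) in Hy; [|lra].
      replace ((K + 1) * (e / (K + 1))) with e in Hy by (field; lra). lra.
Qed.

Lemma cont_F2 (F : R -> R -> R) L (X Y : R -> R) s : 0 <= L ->
  (forall x y x' y', Rabs (F x y - F x' y') <= L * (Rabs (x - x') + Rabs (y - y'))) ->
  continuous X s -> continuous Y s -> continuous (fun u => F (X u) (Y u)) s.
Proof.
  intros HL HF HX HY. apply cont_eps. intros e He.
  destruct (cont_eps_inv X s HX (e / (2*(L+1)))) as [d1 [Hd1 H1]].
  { apply Rdiv_lt_0_compat; lra. }
  destruct (cont_eps_inv Y s HY (e / (2*(L+1)))) as [d2 [Hd2 H2]].
  { apply Rdiv_lt_0_compat; lra. }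
  exists (Rmin d1 d2). split; [apply Rmin_pos; auto|].
  intros y Hy. eapply Rle_lt_trans; [apply HF|].
  assert (Hy1 : Rabs (y - s) < d1) by (eapply Rlt_le_trans; [exact Hy| apply Rmin_l]).
  assert (Hy2 : Rabs (y - s) < d2) by (eapply Rlt_le_trans; [exact Hy| apply Rmin_r]).
  specialize (H1 y Hy1). specialize (H2 y Hy2).
  set (q := e / (2 * (L + 1))) in *.
  assert (Hq : 2 * (L+1) * q = e) by (unfold q; field; lra).
  pose proof (Rabs_pos (X y - X s)). pose proof (Rabs_pos (Y y - Y s)).
  apply Rle_lt_trans with ((L+1) * (Rabs (X y - X s) + Rabs (Y y - Y s))); [nra|].
  nra.
Qed.

Lemma ex_RInt_cont (g : R -> R) a b : (forall s, continuous g s) -> ex_RInt g a b.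
Proof. intros H. apply (ex_RInt_continuous (V:=R_CompleteNormedModule)). intros. apply H. Qed.

Lemma is_derive_RInt_cont (g : R -> R) a t : (forall s, continuous g s) ->
  is_derive (fun u => RInt g a u) t (g t).
Proof.
  intros H. apply (is_derive_RInt (V:=R_CompleteNormedModule) g (fun u => RInt g a u) a t); [|apply H].
  apply filter_forall. intros b. apply (RInt_correct (V:=R_CompleteNormedModule)). apply ex_RInt_cont. auto.
Qed.

Lemma cont_RInt_T (g : R -> R) a lo hi : lo <= hi -> (forall s, continuous g s) ->
  forall t, continuous (fun u => RInt g a (clampT lo hi u)) t.
Proof.
  intros Hlh H t. apply (continuous_comp (clampT lo hi) (fun u => RInt g a u)).
  - apply (lip_cont _ 1); [lra|]. intros y. rewrite Rmult_1_l. apply clampT_lip. auto.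
  - apply (ex_derive_continuous (K:=R_AbsRing) (V:=R_NormedModule)). eexists. apply is_derive_RInt_cont. auto.
Qed.

Lemma cont_plus_const (f : R -> R) c t : continuous f t -> continuous (fun u => c + f u) t.
Proof.
  intros H. apply cont_eps. intros e He. destruct (cont_eps_inv f t H e He) as [d [Hd Hy]].
  exists d. split; auto. intros y Hyd. replace (c + f y - (c + f t)) with (f y - f t) by ring. auto.
Qed.

Lemma is_derive_const_plus (f : R -> R) c t l : is_derive f t l -> is_derive (fun u => c + f u) t l.
Proof.
  intros H. pose proof (is_derive_plus (K:=R_AbsRing) (V:=R_NormedModule) (fun _ => c) f t zero l (is_derive_const c t) H) as H2.
  replace (plus zero l) with l in H2 by (rewrite plus_zero_l; reflexivity). exact H2.
Qed.

Lemma unif_cont (f : nat -> R -> R) (g : R -> R) (e : nat -> R) :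
  (forall n t, Rabs (g t - f n t) <= e n) -> (forall eps, 0 < eps -> exists n, e n < eps) ->
  (forall n t, continuous (f n) t) -> forall t, continuous g t.
Proof.
  intros Hb He Hc t. apply cont_eps. intros eps Heps.
  destruct (He (eps/3)) as [n Hn]; [lra|].
  destruct (cont_eps_inv (f n) t (Hc n t) (eps/3)) as [d [Hd Hy]]; [lra|].
  exists d. split; auto. intros y Hyd.
  replace (g y - g t) with ((g y - f n y) + (f n y - f n t) - (g t - f n t)) by ring.
  pose proof (Hb n y). pose proof (Hb n t). pose proof (Hy y Hyd).
  eapply Rle_lt_trans; [apply Rabs_triang|]. rewrite Rabs_Ropp.
  eapply Rle_lt_trans; [apply Rplus_le_compat_r; apply Rabs_triang|]. lra.
Qed.

Lemma zero_of_half (a K : R) : 0 <= a -> (forall n, a <= K * (/2)^n) -> a = 0.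
Proof.
  intros Ha H. destruct (Req_dec a 0) as [|Hne]; auto.
  destruct (half_pow_small K a) as [N HN]; [lra|]. specialize (HN N (le_n _)). specialize (H N). lra.
Qed.

Fixpoint pic (F1 F2 : R -> R -> R) (t0 x0 y0 lo hi : R) (n : nat) : (R -> R) * (R -> R) :=
  match n with
  | O => (fun _ => x0, fun _ => y0)
  | S n => let p := pic F1 F2 t0 x0 y0 lo hi n in
    (fun t => x0 + RInt (fun s => F1 (fst p s) (snd p s)) t0 (clampT lo hi t),
     fun t => y0 + RInt (fun s => F2 (fst p s) (snd p s)) t0 (clampT lo hi t))
  end.

Lemma RInt_T_bound (g : R -> R) Bg t0 eta t : 0 < eta -> (forall s, continuous g s) ->
  (forall s, Rabs (g s) <= Bg) ->
  Rabs (RInt g t0 (clampT (t0 - eta) (t0 + eta) t)) <= eta * Bg.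
Proof.
  intros He Hc Hb. pose proof (clampT_in (t0 - eta) (t0 + eta) t) as HT.
  eapply Rle_trans; [apply abs_RInt_gen|].
  - apply ex_RInt_cont; auto.
  - intros; apply Hb.
  - assert (0 <= Bg) by (pose proof (Hb 0); pose proof (Rabs_pos (g 0)); lra).
    apply Rmult_le_compat_r; auto. unfold Rabs; destruct Rcase_abs; lra.
Qed.

Lemma RInt_minus_R (f g : R -> R) a b : ex_RInt f a b -> ex_RInt g a b ->
  RInt (fun x => f x - g x) a b = RInt f a b - RInt g a b.
Proof. intros. apply (RInt_minus (V:=R_CompleteNormedModule)); auto. Qed.

Lemma plus_minus_l (a b : R) : a + b - a = b.
Proof. ring. Qed.

Lemma picard (F1 F2 : R -> R -> R) (B L t0 x0 y0 eta : R) :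
  0 <= L -> 0 < eta -> 4 * L * eta <= 1 ->
  (forall x y, Rabs (F1 x y) <= B) -> (forall x y, Rabs (F2 x y) <= B) ->
  (forall x y x' y', Rabs (F1 x y - F1 x' y') <= L * (Rabs (x - x') + Rabs (y - y'))) ->
  (forall x y x' y', Rabs (F2 x y - F2 x' y') <= L * (Rabs (x - x') + Rabs (y - y'))) ->
  exists X Y : R -> R, X t0 = x0 /\ Y t0 = y0 /\
    (forall t, t0 - eta < t < t0 + eta ->
       is_derive X t (F1 (X t) (Y t)) /\ is_derive Y t (F2 (X t) (Y t))) /\
    (forall t, Rabs (X t - x0) <= eta * B /\ Rabs (Y t - y0) <= eta * B).
Proof.
  intros HL Heta H4 HB1 HB2 HL1 HL2.
  set (lo := t0 - eta). set (hi := t0 + eta).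
  set (T := clampT lo hi).
  assert (Hlh : lo <= hi) by (unfold lo, hi; lra).
  set (X := fun n => fst (pic F1 F2 t0 x0 y0 lo hi n)).
  set (Y := fun n => snd (pic F1 F2 t0 x0 y0 lo hi n)).
  assert (HXS : forall n t, X (S n) t = x0 + RInt (fun s => F1 (X n s) (Y n s)) t0 (T t)) by reflexivity.
  assert (HYS : forall n t, Y (S n) t = y0 + RInt (fun s => F2 (X n s) (Y n s)) t0 (T t)) by reflexivity.
  assert (HB0 : 0 <= B) by (pose proof (HB1 0 0); pose proof (Rabs_pos (F1 0 0)); lra).
  assert (Hc : forall n s, continuous (X n) s /\ continuous (Y n) s).
  { induction n; intros s.
    - split; apply continuous_const.
    - split.
      + apply (continuous_ext (fun t => x0 + RInt (fun s => F1 (X n s) (Y n s)) t0 (T t))).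
        { intros; symmetry; apply HXS. }
        apply cont_plus_const. apply cont_RInt_T; auto.
        intros u. apply (cont_F2 F1 L); auto; apply IHn.
      + apply (continuous_ext (fun t => y0 + RInt (fun s => F2 (X n s) (Y n s)) t0 (T t))).
        { intros; symmetry; apply HYS. }
        apply cont_plus_const. apply cont_RInt_T; auto.
        intros u. apply (cont_F2 F2 L); auto; apply IHn. }
  assert (Hcg1 : forall n s, continuous (fun u => F1 (X n u) (Y n u)) s).
  { intros n s. apply (cont_F2 F1 L); auto; apply Hc. }
  assert (Hcg2 : forall n s, continuous (fun u => F2 (X n u) (Y n u)) s).
  { intros n s. apply (cont_F2 F2 L); auto; apply Hc. }
  set (K := 2 * B * eta).
  assert (Hdiff : forall n t, Rabs (X (S n) t - X n t) + Rabs (Y (S n) t - Y n t) <= K * (/2)^n).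
  { induction n; intros t.
    - rewrite HXS, HYS. change (X 0%nat t) with x0. change (Y 0%nat t) with y0.
      rewrite !plus_minus_l.
      pose proof (RInt_T_bound (fun s => F1 (X 0%nat s) (Y 0%nat s)) B t0 eta t Heta (Hcg1 0%nat) (fun s => HB1 _ _)).
      pose proof (RInt_T_bound (fun s => F2 (X 0%nat s) (Y 0%nat s)) B t0 eta t Heta (Hcg2 0%nat) (fun s => HB2 _ _)).
      unfold T, lo, hi, K. simpl. lra.
    - rewrite (HXS (S n)), (HXS n), (HYS (S n)), (HYS n).
      set (T' := T t).
      assert (E1 : x0 + RInt (fun s => F1 (X (S n) s) (Y (S n) s)) t0 T' - (x0 + RInt (fun s => F1 (X n s) (Y n s)) t0 T')
                   = RInt (fun s => F1 (X (S n) s) (Y (S n) s) - F1 (X n s) (Y n s)) t0 T').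
      { rewrite RInt_minus_R; try (apply ex_RInt_cont; auto). ring. }
      assert (E2 : y0 + RInt (fun s => F2 (X (S n) s) (Y (S n) s)) t0 T' - (y0 + RInt (fun s => F2 (X n s) (Y n s)) t0 T')
                   = RInt (fun s => F2 (X (S n) s) (Y (S n) s) - F2 (X n s) (Y n s)) t0 T').
      { rewrite RInt_minus_R; try (apply ex_RInt_cont; auto). ring. }
      rewrite E1, E2. unfold T', T.
      assert (Hd1 : forall s, Rabs (F1 (X (S n) s) (Y (S n) s) - F1 (X n s) (Y n s)) <= L * (K * (/2)^n)).
      { intros s. eapply Rle_trans; [apply HL1|]. apply Rmult_le_compat_l; auto. }
      assert (Hd2 : forall s, Rabs (F2 (X (S n) s) (Y (S n) s) - F2 (X n s) (Y n s)) <= L * (K * (/2)^n)).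
      { intros s. eapply Rle_trans; [apply HL2|]. apply Rmult_le_compat_l; auto. }
      assert (Hm1 : forall s, continuous (fun s => F1 (X (S n) s) (Y (S n) s) - F1 (X n s) (Y n s)) s).
      { intros s. apply (continuous_minus (fun s => F1 (X (S n) s) (Y (S n) s)) (fun s => F1 (X n s) (Y n s))); auto. }
      assert (Hm2 : forall s, continuous (fun s => F2 (X (S n) s) (Y (S n) s) - F2 (X n s) (Y n s)) s).
      { intros s. apply (continuous_minus (fun s => F2 (X (S n) s) (Y (S n) s)) (fun s => F2 (X n s) (Y n s))); auto. }
      pose proof (RInt_T_bound (fun s : R => F1 (X (S n) s) (Y (S n) s) - F1 (X n s) (Y n s)) _ t0 eta t Heta Hm1 Hd1) as Q1.
      pose proof (RInt_T_bound (fun s : R => F2 (X (S n) s) (Y (S n) s) - F2 (X n s) (Y n s)) _ t0 eta t Heta Hm2 Hd2) as Q2. fold lo hi in Q1, Q2.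
      rewrite half_pow_S.
      assert (HK0 : 0 <= K) by (unfold K; apply Rmult_le_pos; lra).
      assert (0 <= K * (/2)^n) by (pose proof (half_pow_pos n); apply Rmult_le_pos; lra).
      assert (HH : 0 <= (1 - 4*L*eta) * (K*(/2)^n)) by (apply Rmult_le_pos; lra).
      nra. }
  assert (HK0 : 0 <= K) by (unfold K; apply Rmult_le_pos; lra).
  set (Xl := fun t => real (Lim_seq (fun n => X n t))).
  set (Yl := fun t => real (Lim_seq (fun n => Y n t))).
  assert (HuX : forall n t, Rabs (Xl t - X n t) <= 2*K*(/2)^n).
  { intros n t. apply (geo_cauchy (fun n => X n t)). intros m.
    pose proof (Hdiff m t). pose proof (Rabs_pos (Y (S m) t - Y m t)). lra. }
  assert (HuY : forall n t, Rabs (Yl t - Y n t) <= 2*K*(/2)^n).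
  { intros n t. apply (geo_cauchy (fun n => Y n t)). intros m.
    pose proof (Hdiff m t). pose proof (Rabs_pos (X (S m) t - X m t)). lra. }
  assert (Hsmall : forall eps, 0 < eps -> exists n, 2*K*(/2)^n < eps).
  { intros e He. destruct (half_pow_small (2*K) e He) as [N HN]. exists N. apply HN. lia. }
  assert (HcX : forall t, continuous Xl t).
  { apply (unif_cont X Xl (fun n => 2*K*(/2)^n)); auto. intros; apply Hc. }
  assert (HcY : forall t, continuous Yl t).
  { apply (unif_cont Y Yl (fun n => 2*K*(/2)^n)); auto. intros; apply Hc. }
  set (G1 := fun s => F1 (Xl s) (Yl s)).
  set (G2 := fun s => F2 (Xl s) (Yl s)).
  assert (HcG1 : forall s, continuous G1 s) by (intros s; apply (cont_F2 F1 L); auto).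
  assert (HcG2 : forall s, continuous G2 s) by (intros s; apply (cont_F2 F2 L); auto).
  assert (HeqX : forall t, Xl t = x0 + RInt G1 t0 (T t)).
  { intros t. apply Rminus_diag_uniq. apply Rabs_eq_0.
    apply (zero_of_half _ (K + 4 * eta * L * K)); [apply Rabs_pos|]. intros n.
    assert (Hd1 : forall s, Rabs (F1 (X n s) (Y n s) - G1 s) <= L * (4*K*(/2)^n)).
    { intros s. unfold G1. eapply Rle_trans; [apply HL1|]. apply Rmult_le_compat_l; auto.
      pose proof (HuX n s). pose proof (HuY n s).
      rewrite <- (Rabs_Ropp (X n s - Xl s)), <- (Rabs_Ropp (Y n s - Yl s)).
      replace (- (X n s - Xl s)) with (Xl s - X n s) by ring.
      replace (- (Y n s - Yl s)) with (Yl s - Y n s) by ring. lra. }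
    assert (Hm1 : forall s, continuous (fun s => F1 (X n s) (Y n s) - G1 s) s).
    { intros s. apply (continuous_minus (fun s => F1 (X n s) (Y n s)) G1); auto. }
    pose proof (RInt_T_bound (fun s : R => F1 (X n s) (Y n s) - G1 s) _ t0 eta t Heta Hm1 Hd1) as Q1.
    fold lo hi T in Q1.
    rewrite RInt_minus_R in Q1 by (apply ex_RInt_cont; auto).
    pose proof (HuX (S n) t) as Q2. rewrite HXS in Q2. rewrite half_pow_S in Q2.
    replace (Xl t - (x0 + RInt G1 t0 (T t))) with
      ((Xl t - (x0 + RInt (fun s : R => F1 (X n s) (Y n s)) t0 (T t))) +
       (RInt (fun s : R => F1 (X n s) (Y n s)) t0 (T t) - RInt G1 t0 (T t))) by ring.
    eapply Rle_trans; [apply Rabs_triang|]. nra. }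
  assert (HeqY : forall t, Yl t = y0 + RInt G2 t0 (T t)).
  { intros t. apply Rminus_diag_uniq. apply Rabs_eq_0.
    apply (zero_of_half _ (K + 4 * eta * L * K)); [apply Rabs_pos|]. intros n.
    assert (Hd1 : forall s, Rabs (F2 (X n s) (Y n s) - G2 s) <= L * (4*K*(/2)^n)).
    { intros s. unfold G2. eapply Rle_trans; [apply HL2|]. apply Rmult_le_compat_l; auto.
      pose proof (HuX n s). pose proof (HuY n s).
      rewrite <- (Rabs_Ropp (X n s - Xl s)), <- (Rabs_Ropp (Y n s - Yl s)).
      replace (- (X n s - Xl s)) with (Xl s - X n s) by ring.
      replace (- (Y n s - Yl s)) with (Yl s - Y n s) by ring. lra. }
    assert (Hm1 : forall s, continuous (fun s => F2 (X n s) (Y n s) - G2 s) s).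
    { intros s. apply (continuous_minus (fun s => F2 (X n s) (Y n s)) G2); auto. }
    pose proof (RInt_T_bound (fun s : R => F2 (X n s) (Y n s) - G2 s) _ t0 eta t Heta Hm1 Hd1) as Q1.
    fold lo hi T in Q1.
    rewrite RInt_minus_R in Q1 by (apply ex_RInt_cont; auto).
    pose proof (HuY (S n) t) as Q2. rewrite HYS in Q2. rewrite half_pow_S in Q2.
    replace (Yl t - (y0 + RInt G2 t0 (T t))) with
      ((Yl t - (y0 + RInt (fun s : R => F2 (X n s) (Y n s)) t0 (T t))) +
       (RInt (fun s : R => F2 (X n s) (Y n s)) t0 (T t) - RInt G2 t0 (T t))) by ring.
    eapply Rle_trans; [apply Rabs_triang|]. nra. }
  exists Xl, Yl. split; [|split; [|split]].
  - rewrite HeqX. unfold T. rewrite clampT_id by (unfold lo, hi; lra).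
    rewrite RInt_point. unfold zero; simpl. ring.
  - rewrite HeqY. unfold T. rewrite clampT_id by (unfold lo, hi; lra).
    rewrite RInt_point. unfold zero; simpl. ring.
  - intros t Ht.
    assert (Hloc : locally t (fun u => lo < u < hi)).
    { destruct Ht as [Ha Hb]. assert (Hp1 : 0 < t - lo) by lra. assert (Hp2 : 0 < hi - t) by lra.
      exists (mkposreal (Rmin (t - lo) (hi - t)) (Rmin_pos _ _ Hp1 Hp2)).
      intros u Hu. unfold ball in Hu; simpl in Hu; unfold AbsRing_ball, abs, minus, plus, opp in Hu; simpl in Hu.
      pose proof (Rmin_l (t - lo) (hi - t)). pose proof (Rmin_r (t - lo) (hi - t)).
      unfold Rabs in Hu; destruct Rcase_abs in Hu; lra. }
    split.
    + apply (is_derive_ext_loc (fun u => x0 + RInt G1 t0 u)).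
      { eapply filter_imp; [|exact Hloc]. intros u Hu. simpl. rewrite HeqX. unfold T. rewrite clampT_id; auto. lra. }
      apply is_derive_const_plus. apply (is_derive_RInt_cont G1). auto.
    + apply (is_derive_ext_loc (fun u => y0 + RInt G2 t0 u)).
      { eapply filter_imp; [|exact Hloc]. intros u Hu. simpl. rewrite HeqY. unfold T. rewrite clampT_id; auto. lra. }
      apply is_derive_const_plus. apply (is_derive_RInt_cont G2). auto.
  - intros t. rewrite HeqX, HeqY, !plus_minus_l. split.
    + apply RInt_T_bound; auto. intros; apply HB1.
    + apply RInt_T_bound; auto. intros; apply HB2.
Qed.

Lemma uniq2 (F1 F2 : R -> R -> R) L (X Y U V : R -> R) a b t0 :
  0 <= L ->
  (forall x y x' y', Rabs (F1 x y - F1 x' y') <= L * (Rabs (x - x') + Rabs (y - y'))) ->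
  (forall x y x' y', Rabs (F2 x y - F2 x' y') <= L * (Rabs (x - x') + Rabs (y - y'))) ->
  a < t0 < b ->
  (forall t, a < t < b -> is_derive X t (F1 (X t) (Y t)) /\ is_derive Y t (F2 (X t) (Y t))) ->
  (forall t, a < t < b -> is_derive U t (F1 (U t) (V t)) /\ is_derive V t (F2 (U t) (V t))) ->
  X t0 = U t0 -> Y t0 = V t0 ->
  forall t, a < t < b -> X t = U t /\ Y t = V t.
Proof.
  intros HL HL1 HL2 Ht0 HXY HUV E1 E2.
  set (E := fun t => (X t - U t)^2 + (Y t - V t)^2).
  set (dE := fun t => 2 * (X t - U t) * (F1 (X t) (Y t) - F1 (U t) (V t)) + 2 * (Y t - V t) * (F2 (X t) (Y t) - F2 (U t) (V t))).
  assert (Hineq : forall t, Rabs (dE t) <= 4 * L * E t).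
  { intros t. unfold dE, E.
    pose proof (HL1 (X t) (Y t) (U t) (V t)) as Q1. pose proof (HL2 (X t) (Y t) (U t) (V t)) as Q2.
    set (p := X t - U t) in *. set (q := Y t - V t) in *.
    set (d1 := F1 (X t) (Y t) - F1 (U t) (V t)) in *. set (d2 := F2 (X t) (Y t) - F2 (U t) (V t)) in *.
    eapply Rle_trans; [apply Rabs_triang|]. rewrite !Rabs_mult. rewrite (Rabs_right 2) by lra.
    rewrite <- (pow2_abs p), <- (pow2_abs q).
    pose proof (Rabs_pos p). pose proof (Rabs_pos q). pose proof (Rabs_pos d1). pose proof (Rabs_pos d2).
    assert (Rabs p * Rabs d1 <= Rabs p * (L * (Rabs p + Rabs q))) by (apply Rmult_le_compat_l; auto).
    assert (Rabs q * Rabs d2 <= Rabs q * (L * (Rabs p + Rabs q))) by (apply Rmult_le_compat_l; auto).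
    assert (0 <= L * (Rabs p - Rabs q)^2) by (apply Rmult_le_pos; auto; apply pow2_ge_0).
    nra. }
  assert (HdE : forall k t, a < t < b -> is_derive (fun u => E u * exp (k * u)) t (dE t * exp (k * t) + E t * (k * exp (k * t)))).
  { intros k t Ht. destruct (HXY t Ht) as [HX HY]. destruct (HUV t Ht) as [HU HV].
    unfold E. auto_derive.
    - repeat split; eexists; eauto.
    - replace (Derive (fun x => X x) t) with (F1 (X t) (Y t)) by (symmetry; apply is_derive_unique; auto).
      replace (Derive (fun x => U x) t) with (F1 (U t) (V t)) by (symmetry; apply is_derive_unique; auto).
      replace (Derive (fun x => Y x) t) with (F2 (X t) (Y t)) by (symmetry; apply is_derive_unique; auto).
      replace (Derive (fun x => V x) t) with (F2 (U t) (V t)) by (symmetry; apply is_derive_unique; auto).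
      unfold dE. ring. }
  assert (HE0 : E t0 = 0) by (unfold E; rewrite E1, E2; ring).
  assert (HEpos : forall t, 0 <= E t) by (intros; unfold E; pose proof (pow2_ge_0 (X t - U t)); pose proof (pow2_ge_0 (Y t - V t)); lra).
  assert (HEt : forall t, a < t < b -> E t = 0).
  { intros t Ht. destruct (Rle_dec t0 t) as [Hle|Hlt].
    - pose proof (nonincr (fun u => E u * exp (- (4*L) * u)) (fun u => dE u * exp (- (4*L) * u) + E u * (- (4*L) * exp (- (4*L) * u))) a b
        (fun u Hu => HdE _ u Hu)) as Hn.
      assert (Hm : forall x, a < x < b -> dE x * exp (- (4 * L) * x) + E x * (- (4 * L) * exp (- (4 * L) * x)) <= 0).
      { intros x Hx. pose proof (exp_pos (- (4*L) * x)). pose proof (Hineq x). pose proof (Rle_abs (dE x)). nra. }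
      specialize (Hn Hm t0 t ltac:(lra) Hle ltac:(lra)). simpl in Hn. rewrite HE0 in Hn.
      pose proof (exp_pos (- (4*L) * t)). pose proof (HEpos t). nra.
    - pose proof (nonincr (fun u => - (E u * exp ((4*L) * u))) (fun u => - (dE u * exp ((4*L) * u) + E u * ((4*L) * exp ((4*L) * u)))) a b) as Hn.
      assert (Hd : forall x, a < x < b -> is_derive (fun u => - (E u * exp ((4*L) * u))) x (- (dE x * exp ((4*L) * x) + E x * ((4*L) * exp ((4*L) * x))))).
      { intros x Hx. apply (is_derive_opp (K:=R_AbsRing) (V:=R_NormedModule)). apply HdE; auto. }
      assert (Hm : forall x, a < x < b -> - (dE x * exp ((4 * L) * x) + E x * ((4 * L) * exp ((4 * L) * x))) <= 0).
      { intros x Hx. pose proof (exp_pos ((4*L) * x)). pose proof (Hineq x). pose proof (Rle_abs (- dE x)). rewrite Rabs_Ropp in *. nra. }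
      specialize (Hn Hd Hm t t0 ltac:(lra) ltac:(lra) ltac:(lra)). simpl in Hn. rewrite HE0 in Hn.
      pose proof (exp_pos ((4*L) * t)). pose proof (HEpos t). nra. }
  intros t Ht. specialize (HEt t Ht). unfold E in HEt.
  pose proof (pow2_ge_0 (X t - U t)). pose proof (pow2_ge_0 (Y t - V t)).
  assert ((X t - U t)^2 = 0) by lra. assert ((Y t - V t)^2 = 0) by lra.
  split; apply Rminus_diag_uniq; nra.
Qed.

Lemma my_loc_int (a b t : R) : a < t < b -> locally t (fun u => a < u < b).
Proof.
  intros [Ha Hb]. assert (Hp1 : 0 < t - a) by lra. assert (Hp2 : 0 < b - t) by lra.
  exists (mkposreal (Rmin (t - a) (b - t)) (Rmin_pos _ _ Hp1 Hp2)).
  intros u Hu. unfold ball in Hu; simpl in Hu; unfold AbsRing_ball, abs, minus, plus, opp in Hu; simpl in Hu.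
  pose proof (Rmin_l (t - a) (b - t)). pose proof (Rmin_r (t - a) (b - t)).
  unfold Rabs in Hu; destruct Rcase_abs in Hu; lra.
Qed.

Lemma my_loc_gt (a t : R) : a < t -> locally t (fun u => a < u).
Proof.
  intros Ha. eapply filter_imp; [|apply (my_loc_int a (t+1) t); lra]. simpl. intros u Hu; lra.
Qed.

Lemma my_loc_lt (b t : R) : t < b -> locally t (fun u => u < b).
Proof.
  intros Ha. eapply filter_imp; [|apply (my_loc_int (t-1) b t); lra]. simpl. intros u Hu; lra.
Qed.

Lemma sol_loc (delta : R -> R) (s f : R -> R) t :
  locally t (fun u => s u = f u) ->
  0 < f t /\ ex_derive f t /\ ex_derive (Derive f) t /\
    Derive (Derive f) t + delta (f t) * Derive f t = - 1 / (f t) ^ 2 ->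
  0 < s t /\ ex_derive s t /\ ex_derive (Derive s) t /\
    Derive (Derive s) t + delta (s t) * Derive s t = - 1 / (s t) ^ 2.
Proof.
  intros Hl [H1 [H2 [H3 H4]]].
  assert (Hst : s t = f t) by (apply (locally_singleton _ _ Hl)).
  assert (HD : locally t (fun u => Derive f u = Derive s u)).
  { eapply filter_imp; [|apply (locally_locally _ _ Hl)]. simpl. intros u Hu.
    apply Derive_ext_loc. eapply filter_imp; [|exact Hu]. simpl. intros; auto. }
  assert (HDt : Derive s t = Derive f t) by (symmetry; apply (locally_singleton _ _ HD)).
  rewrite Hst, HDt. repeat split; auto.
  - apply (ex_derive_ext_loc f s t). { eapply filter_imp; [|exact Hl]. simpl; intros; auto. } auto.
  - apply (ex_derive_ext_loc (Derive f) (Derive s) t HD). auto.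
  - rewrite <- (Derive_ext_loc _ _ t HD). auto.
Qed.

Lemma delta_lip (delta : R -> R)
  (delta_C1 : forall x : R, 0 < x -> ex_derive delta x /\ continuous (Derive delta) x) lo hi :
  0 < lo -> lo <= hi -> exists D, 0 <= D /\
    forall a b, lo <= a <= hi -> lo <= b <= hi -> Rabs (delta a - delta b) <= D * Rabs (a - b).
Proof.
  intros Hlo Hlh.
  destruct (continuity_ab_maj (fun x => Rabs (Derive delta x)) lo hi Hlh) as [Mx [HMx _]].
  { intros z Hz. apply continuity_pt_filterlim. apply (continuous_Rabs_comp (Derive delta)).
    apply delta_C1. lra. }
  exists (Rabs (Derive delta Mx)). split; [apply Rabs_pos|].
  intros a b Ha Hb.
  destruct (MVT_gen delta b a (Derive delta)) as [z [Hz Heq]].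
  - intros x Hx.
    assert (lo < x) by (destruct (Rle_dec b a); [rewrite Rmin_left in Hx by lra| rewrite Rmin_right in Hx by lra]; lra).
    apply Derive_correct. apply delta_C1. lra.
  - intros x Hx. apply continuity_pt_filterlim.
    apply (ex_derive_continuous (K:=R_AbsRing) (V:=R_NormedModule)). apply delta_C1.
    destruct (Rle_dec b a); [rewrite Rmin_left in Hx by lra| rewrite Rmin_right in Hx by lra]; lra.
  - rewrite Heq, Rabs_mult. apply Rmult_le_compat_r; [apply Rabs_pos|]. apply HMx.
    destruct (Rle_dec b a); [rewrite Rmin_left in Hz by lra; rewrite Rmax_right in Hz by lra
                            | rewrite Rmin_right in Hz by lra; rewrite Rmax_left in Hz by lra]; lra.
Qed.

Lemma inv_sq_lip (m Mx u u' : R) : 0 < m -> m <= u <= Mx -> m <= u' <= Mx ->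
  Rabs (1 / u ^ 2 - 1 / u' ^ 2) <= 2 * Mx / m ^ 4 * Rabs (u - u').
Proof.
  intros Hm Hu Hu'.
  replace (1 / u ^ 2 - 1 / u' ^ 2) with ((u' - u) * ((u' + u) / (u ^ 2 * u' ^ 2))) by (field; lra).
  rewrite Rabs_mult. rewrite <- Rabs_Ropp, Ropp_minus_distr. rewrite Rmult_comm.
  apply Rmult_le_compat_r; [apply Rabs_pos|].
  assert (Hpos : 0 < u ^ 2 * u' ^ 2) by (apply Rmult_lt_0_compat; apply pow_lt; lra).
  rewrite Rabs_right by (apply Rle_ge; apply Rdiv_le_0_compat; lra).
  unfold Rdiv. apply Rmult_le_compat; try lra.
  - apply Rlt_le, Rinv_0_lt_compat; auto.
  - apply Rinv_le_contravar; [apply pow_lt; lra|].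
    replace (m ^ 4) with (m^2 * m^2) by ring.
    assert (m^2 <= u^2) by (apply pow_incr; lra). assert (m^2 <= u'^2) by (apply pow_incr; lra).
    apply Rmult_le_compat; try lra; apply pow2_ge_0.
Qed.

Lemma ext_contra (delta : R -> R)
  (delta_bounded : exists M : R, forall x : R, 0 < x -> Rabs (delta x) <= M)
  (delta_C1 : forall x : R, 0 < x -> ex_derive delta x /\ continuous (Derive delta) x)
  (alpha : R) (omega : Rbar) (r : R -> R)
  (Hsol : is_sol delta alpha omega r)
  (Hmaxl : maximal_left delta alpha omega r) (t1 c C Bd : R) :
  alpha < t1 -> Rbar_lt t1 omega -> 0 < c ->
  (forall t, alpha < t <= t1 -> c <= r t <= C /\ Rabs (Derive r t) <= Bd) -> False.
Proof.
  intros Ht1 Ht1w Hc Hbox.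
  destruct delta_bounded as [M HM].
  assert (HM0 : 0 <= M) by (pose proof (HM 1 ltac:(lra)); pose proof (Rabs_pos (delta 1)); lra).
  destruct (Hbox t1 ltac:(lra)) as [HcC HBd].
  assert (HBd0 : 0 <= Bd) by (pose proof (Rabs_pos (Derive r t1)); lra).
  destruct (delta_lip delta delta_C1 (c/2) (C+1)) as [D [HD0 HD]]; [lra|lra|].
  set (clx := clampT (c/2) (C+1)).
  set (cly := clampT (-(Bd+1)) (Bd+1)).
  assert (Hclx : forall x, c/2 <= clx x <= C+1) by (intros; apply clampT_in; lra).
  assert (Hcly : forall y, -(Bd+1) <= cly y <= Bd+1) by (intros; apply clampT_in; lra).
  set (F1 := fun (x y : R) => cly y).
  set (F2 := fun (x y : R) => - 1 / (clx x) ^ 2 - delta (clx x) * cly y).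
  set (B2 := / ((c/2)^2) + M * (Bd + 1)).
  set (Bb := Bd + 1 + B2).
  assert (HB2pos : 0 < / ((c/2)^2)) by (apply Rinv_0_lt_compat; apply pow_lt; lra).
  assert (HBb : 0 < Bb) by (unfold Bb, B2; nra).
  assert (HB1 : forall x y, Rabs (F1 x y) <= Bb).
  { intros x y. unfold F1, Bb, B2. pose proof (Hcly y). unfold Rabs; destruct Rcase_abs; nra. }
  assert (HB2 : forall x y, Rabs (F2 x y) <= Bb).
  { intros x y. unfold F2, Bb, B2.
    pose proof (Hclx x). pose proof (Hcly y).
    assert (Hi : Rabs (- 1 / clx x ^ 2) <= / ((c/2)^2)).
    { replace (- 1 / clx x ^ 2) with (- / clx x ^ 2) by (field; lra). rewrite Rabs_Ropp.
      rewrite Rabs_right by (apply Rle_ge, Rlt_le, Rinv_0_lt_compat, pow_lt; lra).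
      apply Rinv_le_contravar; [apply pow_lt; lra|]. apply pow_incr; lra. }
    assert (Hd : Rabs (delta (clx x) * cly y) <= M * (Bd + 1)).
    { rewrite Rabs_mult. apply Rmult_le_compat; try apply Rabs_pos.
      - apply HM; lra.
      - unfold Rabs; destruct Rcase_abs; lra. }
    eapply Rle_trans; [apply Rabs_triang|]. rewrite Rabs_Ropp. lra. }
  set (L := 1 + M + 2 * (C+1) / (c/2)^4 + (Bd+1) * D).
  assert (HL4 : 0 <= 2 * (C+1) / (c/2)^4) by (apply Rdiv_le_0_compat; [lra| apply pow_lt; lra]).
  assert (HL0 : 1 <= L) by (unfold L; nra).
  assert (HL1 : forall x y x' y', Rabs (F1 x y - F1 x' y') <= L * (Rabs (x - x') + Rabs (y - y'))).
  { intros. unfold F1. eapply Rle_trans; [apply clampT_lip; lra|].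
    pose proof (Rabs_pos (x - x')). pose proof (Rabs_pos (y - y')). nra. }
  assert (HL2 : forall x y x' y', Rabs (F2 x y - F2 x' y') <= L * (Rabs (x - x') + Rabs (y - y'))).
  { intros x y x' y'. unfold F2.
    set (u := clx x). set (u' := clx x'). set (v := cly y). set (v' := cly y').
    assert (Hu : Rabs (u - u') <= Rabs (x - x')) by (apply clampT_lip; lra).
    assert (Hv : Rabs (v - v') <= Rabs (y - y')) by (apply clampT_lip; lra).
    pose proof (Hclx x). pose proof (Hclx x'). pose proof (Hcly y). pose proof (Hcly y').
    fold u u' v v' in H, H0, H1, H2.
    pose proof (inv_sq_lip (c/2) (C+1) u u' ltac:(lra) H H0) as Hi.
    assert (Hd : Rabs (delta u * v - delta u' * v') <= M * Rabs (v - v') + (Bd+1) * D * Rabs (u - u')).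
    { replace (delta u * v - delta u' * v') with (delta u * (v - v') + v' * (delta u - delta u')) by ring.
      eapply Rle_trans; [apply Rabs_triang|]. rewrite !Rabs_mult.
      apply Rplus_le_compat.
      - apply Rmult_le_compat_r; [apply Rabs_pos|]. apply HM; lra.
      - rewrite Rmult_assoc. apply Rmult_le_compat; try apply Rabs_pos.
        + unfold Rabs; destruct Rcase_abs; lra.
        + apply HD; lra. }
    replace (- 1 / u ^ 2 - delta u * v - (- 1 / u' ^ 2 - delta u' * v')) with
      (- (1 / u ^ 2 - 1 / u' ^ 2) - (delta u * v - delta u' * v')) by (field; lra).
    eapply Rle_trans; [apply Rabs_triang|]. rewrite Rabs_Ropp, Rabs_Ropp.
    pose proof (Rabs_pos (u - u')). pose proof (Rabs_pos (v - v')).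
    pose proof (Rabs_pos (x - x')). pose proof (Rabs_pos (y - y')).
    assert (2 * (C + 1) / (c / 2) ^ 4 * Rabs (u - u') <= 2 * (C + 1) / (c / 2) ^ 4 * Rabs (x - x'))
      by (apply Rmult_le_compat_l; lra).
    assert (M * Rabs (v - v') <= M * Rabs (y - y')) by (apply Rmult_le_compat_l; lra).
    assert ((Bd+1) * D * Rabs (u - u') <= (Bd+1) * D * Rabs (x - x')) by (apply Rmult_le_compat_l; nra).
    unfold L. set (K4 := 2 * (C + 1) / (c / 2) ^ 4) in *.
    assert (0 <= M * Rabs (x - x')) by (apply Rmult_le_pos; lra).
    assert (0 <= K4 * Rabs (y - y')) by (apply Rmult_le_pos; lra).
    assert (0 <= (Bd + 1) * D * Rabs (y - y')) by (apply Rmult_le_pos; nra).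
    lra. }
  set (eta := Rmin (Rmin (/ (4 * L)) (Rmin (c/2) (1/2) / Bb)) ((t1 - alpha) / 2)).
  assert (Hm0 : 0 < Rmin (c/2) (1/2)) by (apply Rmin_pos; lra).
  assert (Heta : 0 < eta).
  { unfold eta. apply Rmin_pos; [apply Rmin_pos|lra].
    - apply Rinv_0_lt_compat; lra.
    - apply Rdiv_lt_0_compat; lra. }
  assert (He1 : eta <= / (4 * L)) by (unfold eta; eapply Rle_trans; [apply Rmin_l|apply Rmin_l]).
  assert (He2 : eta <= Rmin (c/2) (1/2) / Bb) by (unfold eta; eapply Rle_trans; [apply Rmin_l|apply Rmin_r]).
  assert (He3 : eta <= (t1 - alpha) / 2) by (unfold eta; apply Rmin_r).
  assert (H4L : 4 * L * eta <= 1).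
  { apply Rmult_le_compat_l with (r := 4 * L) in He1; [|lra]. rewrite Rinv_r in He1 by lra. lra. }
  assert (HeB : eta * Bb <= Rmin (c/2) (1/2)).
  { apply Rmult_le_compat_r with (r := Bb) in He2; [|lra]. unfold Rdiv in He2.
    rewrite Rmult_assoc, Rinv_l, Rmult_1_r in He2 by lra. lra. }
  pose proof (Rmin_l (c/2) (1/2)). pose proof (Rmin_r (c/2) (1/2)).
  set (ts := alpha + eta / 2).
  destruct (picard F1 F2 Bb L ts (r ts) (Derive r ts) eta ltac:(lra) Heta H4L HB1 HB2 HL1 HL2)
    as [X [Y [HX0 [HY0 [HXYd HXYb]]]]].
  destruct (Hbox ts ltac:(unfold ts; lra)) as [Hrts HDrts].
  assert (HXin : forall t, c/2 <= X t <= C + 1/2 /\ - (Bd + 1/2) <= Y t <= Bd + 1/2).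
  { intros t. destruct (HXYb t) as [Q1 Q2].
    revert Q1 Q2 HDrts. unfold Rabs. repeat destruct Rcase_abs; intros; lra. }
  assert (HclX : forall t, clx (X t) = X t) by (intros t; apply clampT_id; pose proof (HXin t); lra).
  assert (HclY : forall t, cly (Y t) = Y t) by (intros t; apply clampT_id; pose proof (HXin t); lra).
  assert (Hrd : forall t, alpha < t < t1 -> is_derive r t (F1 (r t) (Derive r t)) /\
                 is_derive (Derive r) t (F2 (r t) (Derive r t))).
  { intros t Ht. destruct (Hbox t ltac:(lra)) as [Hr1 Hr2].
    assert (Hwt : Rbar_lt t omega) by (eapply Rbar_lt_trans; [|exact Ht1w]; simpl; lra).
    destruct (Hsol t ltac:(simpl; lra) Hwt) as [_ [Hd1 [Hd2 Hode]]].
    assert (Ecx : clx (r t) = r t) by (apply clampT_id; lra).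
    assert (Ecy : cly (Derive r t) = Derive r t) by (apply clampT_id; revert Hr2; unfold Rabs; destruct Rcase_abs; intros; lra).
    unfold F1, F2. rewrite Ecx, Ecy. split.
    - apply Derive_correct; auto.
    - replace (- 1 / r t ^ 2 - delta (r t) * Derive r t) with (Derive (Derive r) t) by lra.
      apply Derive_correct; auto. }
  assert (Huniq : forall t, alpha < t < ts + eta -> X t = r t /\ Y t = Derive r t).
  { intros t Ht. apply (uniq2 F1 F2 L X Y r (Derive r) alpha (ts + eta) ts); auto; try lra.
    - unfold ts; lra.
    - intros u Hu. apply HXYd. unfold ts in *; lra.
    - intros u Hu. apply Hrd. unfold ts in *; lra. }
  set (s := fun t => if Rlt_dec alpha t then r t else X t).
  apply (Hmaxl (Finite (alpha - eta/2)) s).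
  - simpl. lra.
  - intros t Ht Htw. simpl in Ht.
    destruct (Rlt_dec alpha t) as [Hat|Hat].
    + apply (sol_loc delta s r t).
      * eapply filter_imp; [|apply (my_loc_gt alpha t Hat)]. simpl. intros u Hu. unfold s.
        destruct (Rlt_dec alpha u); [reflexivity| lra].
      * apply Hsol; auto.
    + apply (sol_loc delta s X t).
      * eapply filter_imp; [|apply (my_loc_int (ts - eta) (ts + eta) t); unfold ts; lra].
        simpl. intros u Hu. unfold s. destruct (Rlt_dec alpha u); [|reflexivity].
        symmetry. apply Huniq. lra.
      * assert (Hin : ts - eta < t < ts + eta) by (unfold ts; lra).
        destruct (HXYd t Hin) as [HdX HdY]. unfold F1, F2 in HdX, HdY. rewrite ?HclX, ?HclY in HdX. rewrite ?HclX, ?HclY in HdY.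
        assert (HDX : locally t (fun u => Y u = Derive X u)).
        { eapply filter_imp; [|apply (my_loc_int _ _ t Hin)]. simpl. intros u Hu.
          destruct (HXYd u Hu) as [HdXu _]. unfold F1 in HdXu. rewrite HclY in HdXu.
          symmetry. apply is_derive_unique. auto. }
        pose proof (HXin t).
        split; [lra|]. split; [eexists; eauto|]. split.
        { apply (ex_derive_ext_loc Y). auto. eexists; eauto. }
        rewrite <- (Derive_ext_loc _ _ t HDX). rewrite (is_derive_unique _ _ _ HdY).
        rewrite (is_derive_unique _ _ _ HdX). ring.
  - intros t Ht Htw. unfold s. destruct (Rlt_dec alpha t); [reflexivity|simpl in Ht; lra].
Qed.

Lemma nonincr2 (f df : R -> R) a b :
  (forall x, a < x <= b -> is_derive f x (df x)) -> (forall x, a < x <= b -> df x <= 0) ->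
  forall x y, a < x -> x <= y -> y <= b -> f y <= f x.
Proof.
  intros Hd Hn x y Hx Hxy Hy. destruct (Req_dec x y) as [->|Hne]; [lra|].
  destruct (MVT_gen f x y df) as [c [Hc Heq]].
  - intros z Hz. rewrite Rmin_left in Hz by lra. rewrite Rmax_right in Hz by lra. apply Hd. lra.
  - intros z Hz. rewrite Rmin_left in Hz by lra. rewrite Rmax_right in Hz by lra.
    apply continuity_pt_filterlim. apply (ex_derive_continuous (K:=R_AbsRing) (V:=R_NormedModule) f). eexists. apply Hd. lra.
  - rewrite Rmin_left in Hc by lra. rewrite Rmax_right in Hc by lra.
    assert (df c <= 0) by (apply Hn; lra). nra.
Qed.

Lemma nondecr2 (f df : R -> R) a b :
  (forall x, a < x <= b -> is_derive f x (df x)) -> (forall x, a < x <= b -> 0 <= df x) ->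
  forall x y, a < x -> x <= y -> y <= b -> f x <= f y.
Proof.
  intros Hd Hn x y Hx Hxy Hy.
  assert (H := nonincr2 (fun u => - f u) (fun u => - df u) a b).
  cut (- f y <= - f x); [lra|]. apply H; auto.
  - intros u Hu. apply (is_derive_opp (K:=R_AbsRing) (V:=R_NormedModule)). auto.
  - intros u Hu. specialize (Hn u Hu). lra.
Qed.

Lemma is_derive_mult_exp (f : R -> R) x l k : is_derive f x l ->
  is_derive (fun u => f u * exp (k * u)) x (l * exp (k * x) + f x * (k * exp (k * x))).
Proof.
  intros H. auto_derive.
  - eexists; eauto.
  - replace (Derive (fun x => f x) x) with l by (symmetry; apply is_derive_unique; auto). ring.
Qed.

Lemma is_derive_plus_lin (f : R -> R) x l k : is_derive f x l ->
  is_derive (fun u => f u + k * u) x (l + k).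
Proof.
  intros H. auto_derive.
  - eexists; eauto.
  - replace (Derive (fun x => f x) x) with l by (symmetry; apply is_derive_unique; auto). ring.
Qed.

Definition solI (delta : R -> R) (a b : R) (r : R -> R) : Prop :=
  forall t, a < t <= b -> 0 < r t /\ is_derive r t (Derive r t) /\
    is_derive (Derive r) t (- 1 / r t ^ 2 - delta (r t) * Derive r t).

Lemma caseB_box (delta : R -> R) M a b r :
  (forall x, 0 < x -> 0 <= delta x <= M) -> a < b -> solI delta a b r ->
  (forall t, a < t <= b -> Derive r t <= 0) ->
  exists c C Bd, 0 < c /\ forall t, a < t <= b -> c <= r t <= C /\ Rabs (Derive r t) <= Bd.
Proof.
  intros Hd Hab Hs Hneg.
  assert (HM : 0 <= M) by (pose proof (Hd 1 ltac:(lra)); lra).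
  destruct (Hs b ltac:(lra)) as [Hrb _].
  assert (Hrdec : forall t, a < t <= b -> r b <= r t).
  { intros t Ht. apply (nonincr2 r (Derive r) a b); try lra.
    - intros x Hx. apply Hs; auto.
    - auto. }
  assert (Hg : forall t, a < t <= b -> Derive r b * exp (M * b) <= Derive r t * exp (M * t)).
  { intros t Ht. apply (nonincr2 (fun u => Derive r u * exp (M * u))
      (fun u => (- 1 / r u ^ 2 - delta (r u) * Derive r u) * exp (M * u) + Derive r u * (M * exp (M * u))) a b); try lra.
    - intros x Hx. destruct (Hs x Hx) as [_ [_ H2]]. apply is_derive_mult_exp. auto.
    - intros x Hx. destruct (Hs x Hx) as [Hr _]. pose proof (Hd (r x) Hr). pose proof (Hneg x Hx).
      pose proof (exp_pos (M * x)).
      assert (0 < 1 / r x ^ 2) by (apply Rdiv_lt_0_compat; [lra| apply pow_lt; lra]).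
      replace (- 1 / r x ^ 2) with (- (1 / r x ^ 2)) by (field; lra).
      assert (Hs' : - (1 / r x ^ 2) - delta (r x) * Derive r x + Derive r x * M <= 0) by nra.
      replace ((- (1 / r x ^ 2) - delta (r x) * Derive r x) * exp (M * x) + Derive r x * (M * exp (M * x)))
        with ((- (1 / r x ^ 2) - delta (r x) * Derive r x + Derive r x * M) * exp (M * x)) by ring.
      nra. }
  set (Bd := Rabs (Derive r b) * exp (M * (b - a))).
  assert (HBd : forall t, a < t <= b -> Rabs (Derive r t) <= Bd).
  { intros t Ht. specialize (Hg t Ht). pose proof (Hneg t Ht). pose proof (Hneg b ltac:(lra)).
    rewrite !Rabs_left1 by lra. unfold Bd. rewrite Rabs_left1 by lra.
    pose proof (exp_pos (M * t)).
    assert (Hx : - Derive r t <= - Derive r b * exp (M * (b - t))).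
    { replace (M * (b - t)) with (M * b + - (M * t)) by ring. rewrite exp_plus, exp_Ropp.
      apply Rmult_le_reg_r with (exp (M * t)); auto.
      rewrite Rmult_assoc, Rmult_assoc, Rinv_l, Rmult_1_r by lra. lra. }
    eapply Rle_trans; [exact Hx|]. apply Rmult_le_compat_l; [lra|].
    destruct (Req_dec (M * (b - t)) (M * (b - a))) as [Heq|Hne]; [rewrite Heq; lra|].
    left. apply exp_increasing. nra. }
  exists (r b), (r b + Bd * (b - a)), Bd. split; auto.
  intros t Ht. split; [split|]; auto.
  -
    assert (H := nondecr2 (fun u => r u + Bd * u) (fun u => Derive r u + Bd) a b).
    assert (r t + Bd * t <= r b + Bd * b).
    { apply H; try lra.
      - intros x Hx. apply is_derive_plus_lin. apply Hs; auto.
      - intros x Hx. pose proof (HBd x Hx) as Q. revert Q. unfold Rabs; destruct Rcase_abs; intros; lra. }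
    pose proof (HBd t Ht). pose proof (Rabs_pos (Derive r t)). nra.
Qed.

Lemma is_derive_mult_expf (f h : R -> R) x lf lh : is_derive f x lf -> is_derive h x lh ->
  is_derive (fun u => f u * exp (h u)) x (lf * exp (h x) + f x * (lh * exp (h x))).
Proof.
  intros H1 H2. auto_derive.
  - split; [eexists; eauto|split; [eexists; eauto|auto]].
  - replace (Derive (fun x => f x) x) with lf by (symmetry; apply is_derive_unique; auto).
    replace (Derive (fun x => h x) x) with lh by (symmetry; apply is_derive_unique; auto). ring.
Qed.

Lemma caseA_pos (delta : R -> R) a b r :
  (forall x, 0 < x -> ex_derive delta x) -> solI delta a b r ->
  forall t1, a < t1 < b -> 0 < Derive r t1 -> forall t, a < t <= t1 -> 0 < Derive r t.
Proof.
  intros Hd Hs t1 Ht1 Hpos t Ht.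
  set (g := fun s => delta (r s)).
  assert (Hg : forall z, a < z <= b -> continuous g z).
  { intros z Hz. destruct (Hs z Hz) as [Hr [H1 _]].
    apply (continuous_comp r delta).
    - apply (ex_derive_continuous (K:=R_AbsRing) (V:=R_NormedModule)). eexists; eauto.
    - apply (ex_derive_continuous (K:=R_AbsRing) (V:=R_NormedModule)). apply Hd; auto. }
  set (Dl := fun u => RInt g t1 u).
  assert (HDl : forall z, a < z <= t1 -> is_derive Dl z (g z)).
  { intros z Hz. apply (is_derive_RInt (V:=R_CompleteNormedModule) g Dl t1 z).
    - eapply filter_imp; [|apply (my_loc_int a b z); lra]. simpl. intros u Hu.
      apply (RInt_correct (V:=R_CompleteNormedModule)). apply (ex_RInt_continuous (V:=R_CompleteNormedModule)).
      intros w Hw. apply Hg.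
      destruct (Rle_dec t1 u); [rewrite Rmin_left in Hw by lra; rewrite Rmax_right in Hw by lra
                              | rewrite Rmin_right in Hw by lra; rewrite Rmax_left in Hw by lra]; lra.
    - apply Hg; lra. }
  assert (Hmono := nonincr2 (fun u => Derive r u * exp (Dl u))
    (fun u => (- 1 / r u ^ 2 - delta (r u) * Derive r u) * exp (Dl u) + Derive r u * (g u * exp (Dl u))) a t1).
  assert (H : Derive r t1 * exp (Dl t1) <= Derive r t * exp (Dl t)).
  { apply Hmono; try lra.
    - intros x Hx. apply is_derive_mult_expf; [apply Hs; lra| apply HDl; auto].
    - intros x Hx. destruct (Hs x ltac:(lra)) as [Hr _]. unfold g. pose proof (exp_pos (Dl x)).
      assert (0 < 1 / r x ^ 2) by (apply Rdiv_lt_0_compat; [lra| apply pow_lt; lra]).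
      replace (- 1 / r x ^ 2) with (- (1 / r x ^ 2)) by (field; lra).
      replace ((- (1 / r x ^ 2) - delta (r x) * Derive r x) * exp (Dl x) + Derive r x * (delta (r x) * exp (Dl x)))
        with (- (1 / r x ^ 2) * exp (Dl x)) by ring. nra. }
  pose proof (exp_pos (Dl t1)). pose proof (exp_pos (Dl t)).
  assert (0 < Derive r t * exp (Dl t)) by nra.
  destruct (Rlt_le_dec 0 (Derive r t)); auto. nra.
Qed.

Lemma caseA_box (delta : R -> R) M a b r :
  (forall x, 0 < x -> 0 <= delta x <= M) -> a < b -> solI delta a b r ->
  (forall t, a < t <= b -> 0 < Derive r t) ->
  forall eps, 0 < eps -> (forall t, a < t <= b -> eps <= r t) ->
  exists C Bd, forall t, a < t <= b -> eps <= r t <= C /\ Rabs (Derive r t) <= Bd.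
Proof.
  intros Hd Hab Hs Hpos eps Heps Hge.
  assert (HM : 0 <= M) by (pose proof (Hd 1 ltac:(lra)); lra).
  assert (Hinc : forall t, a < t <= b -> r t <= r b).
  { intros t Ht. apply (nondecr2 r (Derive r) a b); try lra.
    - intros x Hx. apply Hs; auto.
    - intros x Hx. pose proof (Hpos x Hx). lra. }
  set (K := exp (M * b) / eps ^ 2).
  assert (HK : 0 < K) by (apply Rdiv_lt_0_compat; [apply exp_pos| apply pow_lt; lra]).
  assert (Hg : forall t, a < t <= b -> Derive r t * exp (M * t) + K * t <= Derive r b * exp (M * b) + K * b).
  { intros t Ht. apply (nondecr2 (fun u => Derive r u * exp (M * u) + K * u)
      (fun u => ((- 1 / r u ^ 2 - delta (r u) * Derive r u) * exp (M * u) + Derive r u * (M * exp (M * u))) + K) a b); try lra.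
    - intros x Hx. apply (is_derive_plus_lin (fun u => Derive r u * exp (M * u))).
      apply is_derive_mult_exp. apply Hs; auto.
    - intros x Hx. destruct (Hs x Hx) as [Hr _]. pose proof (Hd (r x) Hr). pose proof (Hpos x Hx).
      pose proof (Hge x Hx).
      assert (Hq : 1 / r x ^ 2 <= 1 / eps ^ 2).
      { unfold Rdiv. rewrite !Rmult_1_l. apply Rinv_le_contravar; [apply pow_lt; lra|]. apply pow_incr; lra. }
      assert (He : exp (M * x) <= exp (M * b)).
      { destruct (Req_dec (M * x) (M * b)) as [Heq|Hne]; [rewrite Heq; lra|]. left. apply exp_increasing. nra. }
      pose proof (exp_pos (M * x)).
      assert (Hq2 : 0 < 1 / r x ^ 2) by (apply Rdiv_lt_0_compat; [lra| apply pow_lt; lra]).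
      replace (- 1 / r x ^ 2) with (- (1 / r x ^ 2)) by (field; lra).
      assert (HKe : exp (M * b) / eps ^ 2 = exp (M * b) * (1 / eps ^ 2)) by (unfold Rdiv; ring).
      assert (0 <= Derive r x * (M - delta (r x)) * exp (M * x)) by (apply Rmult_le_pos; nra).
      assert (exp (M * x) * (1 / r x ^ 2) <= exp (M * b) * (1 / eps ^ 2)).
      { apply Rmult_le_compat; lra. }
      unfold K. rewrite HKe. nra. }
  set (K1 := Derive r b * exp (M * b) + K * (b - a)).
  exists (r b), (K1 * exp (- M * a)). intros t Ht. split; [split; auto|].
  pose proof (Hg t Ht). pose proof (Hpos t Ht). pose proof (Hpos b ltac:(lra)).
  rewrite Rabs_right by lra.
  assert (Hr1 : Derive r t * exp (M * t) <= K1) by (unfold K1; nra).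
  assert (HK1 : 0 <= K1) by (pose proof (exp_pos (M * t)); nra).
  assert (He : exp (- M * t) <= exp (- M * a)).
  { destruct (Req_dec (- M * t) (- M * a)) as [Heq|Hne]; [rewrite Heq; lra|]. left. apply exp_increasing. nra. }
  replace (Derive r t) with ((Derive r t * exp (M * t)) * exp (- M * t)).
  - apply Rmult_le_compat; try lra.
    + pose proof (exp_pos (M * t)). nra.
    + pose proof (exp_pos (- M * t)). lra.
  - rewrite Rmult_assoc, <- exp_plus. replace (M * t + - M * t) with 0 by ring. rewrite exp_0. ring.
Qed.

Lemma energy_deriv (delta : R -> R) a b r : solI delta a b r ->
  forall t, a < t <= b -> is_derive (energy r) t (- delta (r t) * (Derive r t) ^ 2).
Proof.
  intros Hs t Ht. destruct (Hs t Ht) as [Hr [H1 H2]]. unfold energy.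
  auto_derive.
  - repeat split; try (eexists; eauto). lra.
  - replace (Derive (fun x => Derive r x) t) with (- 1 / r t ^ 2 - delta (r t) * Derive r t)
      by (symmetry; apply is_derive_unique; auto).
    replace (Derive (fun x => r x) t) with (Derive r t) by (symmetry; apply is_derive_unique; auto).
    field. lra.
Qed.

Lemma energy_nonincr (delta : R -> R) a b r : (forall x, 0 < x -> 0 <= delta x) -> solI delta a b r ->
  forall x y, a < x -> x <= y -> y <= b -> energy r y <= energy r x.
Proof.
  intros Hd Hs. apply (nonincr2 (energy r) (fun t => - delta (r t) * (Derive r t) ^ 2) a b).
  - intros x Hx. eapply energy_deriv; eauto.
  - intros x Hx. destruct (Hs x Hx) as [Hr _]. pose proof (Hd (r x) Hr). pose proof (pow2_ge_0 (Derive r x)). nra.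
Qed.

Lemma energy_bounded (delta : R -> R) M a b r :
  (forall x, 0 < x -> 0 <= delta x <= M) -> a < b -> solI delta a b r ->
  (forall t, a < t <= b -> 0 < Derive r t) ->
  exists K, forall t, a < t <= b -> energy r t <= K.
Proof.
  intros Hd Hab Hs Hpos.
  assert (HM : 0 <= M) by (pose proof (Hd 1 ltac:(lra)); lra).
  set (c0 := 1 + Rabs (energy r b)).
  assert (Hc0 : forall t, a < t <= b -> 1 <= energy r t + c0).
  { intros t Ht. pose proof (energy_nonincr delta a b r (fun x Hx => proj1 (Hd x Hx)) Hs t b ltac:(lra) ltac:(lra) ltac:(lra)).
    unfold c0. pose proof (Rle_abs (- energy r b)). rewrite Rabs_Ropp in *. lra. }
  set (Psi := fun u => sqrt (energy r u + c0) + M * r u + 2 * M * sqrt (r u)).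
  assert (Hmono : forall t, a < t <= b -> Psi t <= Psi b).
  { intros t Ht.
    apply (nondecr2 Psi (fun u => (- delta (r u) * (Derive r u) ^ 2) / (2 * sqrt (energy r u + c0))
                                 + M * Derive r u + 2 * M * (Derive r u / (2 * sqrt (r u)))) a b); try lra.
    - intros x Hx. destruct (Hs x Hx) as [Hr [H1 H2]].
      pose proof (energy_deriv delta a b r Hs x Hx) as HE. pose proof (Hc0 x Hx).
      unfold Psi. auto_derive.
      + repeat split; try (eexists; eauto); lra.
      + replace (Derive (fun x => energy r x) x) with (- delta (r x) * (Derive r x) ^ 2)
          by (symmetry; apply is_derive_unique; auto).
        replace (Derive (fun x => r x) x) with (Derive r x) by (symmetry; apply is_derive_unique; auto).
        assert (0 < sqrt (energy r x + c0)) by (apply sqrt_lt_R0; lra).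
        assert (0 < sqrt (r x)) by (apply sqrt_lt_R0; lra).
        field. split; lra.
    - intros x Hx. destruct (Hs x Hx) as [Hr _]. pose proof (Hd (r x) Hr) as Hdx. pose proof (Hpos x Hx) as Hv.
      pose proof (Hc0 x Hx) as Hh.
      set (A := sqrt (energy r x + c0)). set (Bs := sqrt (r x)). set (v := Derive r x) in *.
      set (d := delta (r x)) in *.
      assert (HA1 : 1 <= A) by (unfold A; rewrite <- sqrt_1; apply sqrt_le_1_alt; lra).
      assert (HA2 : A * A = energy r x + c0) by (unfold A; apply sqrt_sqrt; lra).
      assert (HB0 : 0 < Bs) by (unfold Bs; apply sqrt_lt_R0; lra).
      assert (HB2 : Bs * Bs = r x) by (unfold Bs; apply sqrt_sqrt; lra).
      set (q := / Bs).
      assert (Hq : 0 < q) by (unfold q; apply Rinv_0_lt_compat; auto).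
      assert (Hq2 : / r x = q * q) by (unfold q; rewrite <- HB2; field; lra).
      assert (Hv2 : v ^ 2 = 2 * (energy r x + / r x)) by (unfold energy, v; field; lra).
      assert (Hc0p : 0 < c0) by (unfold c0; pose proof (Rabs_pos (energy r b)); lra).
      assert (Hvb : v <= 2 * A + 2 * A * q).
      { assert (Hv2' : v ^ 2 <= 2 * (A * A) + 2 * (q * q)) by (rewrite Hv2, HA2, <- Hq2; lra).
        set (W := 2 * A + 2 * A * q).
        assert (HW : 2 * (A * A) + 2 * (q * q) <= W * W).
        { unfold W. assert (q * q <= A * A * (q * q)) by (pose proof (pow2_ge_0 q); nra).
          assert (0 <= A * A * q) by (apply Rmult_le_pos; nra). nra. }
        assert (0 < W) by (unfold W; nra).
        destruct (Rle_lt_dec v W); auto.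
        assert (W * W < v * v) by nra. simpl in Hv2'. lra. }
      replace (- d * v ^ 2 / (2 * A) + M * v + 2 * M * (v / (2 * Bs))) with
        ((2 * A * M * v * (1 + q) - d * v ^ 2) / (2 * A)) by (unfold q; field; lra).
      apply Rdiv_le_0_compat; [|lra].
      assert (d * v ^ 2 <= M * v ^ 2) by (apply Rmult_le_compat_r; [apply pow2_ge_0| lra]).
      assert (M * v * v <= M * v * (2 * A + 2 * A * q)) by (apply Rmult_le_compat_l; nra).
      nra. }
  exists ((Psi b) ^ 2). intros t Ht. specialize (Hmono t Ht). unfold Psi in Hmono.
  destruct (Hs t Ht) as [Hr _]. pose proof (Hc0 t Ht).
  assert (0 <= sqrt (r t)) by apply sqrt_pos.
  assert (0 <= M * r t) by nra.
  assert (Hs1 : sqrt (energy r t + c0) <= Psi b) by (unfold Psi; nra).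
  assert (HA2 : sqrt (energy r t + c0) * sqrt (energy r t + c0) = energy r t + c0) by (apply sqrt_sqrt; lra).
  assert (0 <= sqrt (energy r t + c0)) by apply sqrt_pos.
  assert (Hc0p : 0 < c0) by (unfold c0; pose proof (Rabs_pos (energy r b)); lra).
  nra.
Qed.

Lemma at_right_eps (f : R -> R) a l : filterlim f (at_right a) (locally l) ->
  forall eps, 0 < eps -> exists d, 0 < d /\ forall x, a < x < a + d -> Rabs (f x - l) < eps.
Proof.
  intros H e He. destruct (proj1 (filterlim_locally f l) H (mkposreal e He)) as [[d Hd] Hx].
  exists d. split; auto. intros x Hx1. apply (Hx x).
  - unfold ball; simpl; unfold AbsRing_ball, abs, minus, plus, opp; simpl.
    rewrite Rabs_right; lra.
  - lra.
Qed.

Lemma at_right_intro (f : R -> R) a l :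
  (forall eps, 0 < eps -> exists d, 0 < d /\ forall x, a < x < a + d -> Rabs (f x - l) < eps) ->
  filterlim f (at_right a) (locally l).
Proof.
  intros H. apply filterlim_locally. intros [e He].
  destruct (H e He) as [d [Hd Hx]]. exists (mkposreal d Hd). intros x Hb Hax.
  unfold ball in Hb; simpl in Hb; unfold AbsRing_ball, abs, minus, plus, opp in Hb; simpl in Hb.
  apply Hx. rewrite Rabs_right in Hb; lra.
Qed.

Lemma mono_lim (f : R -> R) a b K : a < b ->
  (forall x y, a < x -> x <= y -> y <= b -> f y <= f x) -> (forall t, a < t <= b -> f t <= K) ->
  exists L, filterlim f (at_right a) (locally L).
Proof.
  intros Hab Hm HK.
  set (E := fun y => exists t, a < t <= b /\ y = f t).
  destruct (completeness E) as [L [Hub Hlub]].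
  - exists K. intros y [t [Ht ->]]. apply HK; auto.
  - exists (f b). exists b. split; [lra|auto].
  - exists L. apply at_right_intro. intros e He.
    assert (Hex : exists t, a < t <= b /\ L - e < f t).
    { apply NNPP. intros Hn. assert (Hb : is_upper_bound E (L - e)).
      { intros y [t [Ht ->]]. destruct (Rle_dec (f t) (L - e)); auto. exfalso. apply Hn. exists t. split; auto. lra. }
      specialize (Hlub _ Hb). lra. }
    destruct Hex as [t [Ht Hft]]. exists (t - a). split; [lra|].
    intros x Hx. assert (f t <= f x) by (apply Hm; lra).
    assert (f x <= L) by (apply Hub; exists x; split; [lra|auto]).
    rewrite Rabs_left1 by lra. lra.
Qed.

Lemma lhop (g dg : R -> R) a b l : a < b ->
  (forall x, a < x <= b -> is_derive g x (dg x)) ->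
  filterlim g (at_right a) (locally 0) -> filterlim dg (at_right a) (locally l) ->
  filterlim (fun t => g t / (t - a)) (at_right a) (locally l).
Proof.
  intros Hab Hd Hg Hdg. apply at_right_intro. intros e He.
  destruct (at_right_eps dg a l Hdg (e/4)) as [d [Hd0 Hdd]]; [lra|].
  exists (Rmin d (b - a)). split; [apply Rmin_pos; lra|].
  intros t Ht. pose proof (Rmin_l d (b - a)). pose proof (Rmin_r d (b - a)).
  set (k := e / 4 * (t - a)).
  assert (Hk : 0 < k) by (unfold k; apply Rmult_lt_0_compat; lra).
  destruct (at_right_eps g a 0 Hg k Hk) as [d1 [Hd1 Hg1]].
  set (s := a + Rmin (Rmin d1 (k / (Rabs l + 1))) (t - a) / 2).
  assert (Hp : 0 < Rmin (Rmin d1 (k / (Rabs l + 1))) (t - a)).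
  { apply Rmin_pos; [apply Rmin_pos; auto|lra]. apply Rdiv_lt_0_compat; auto. pose proof (Rabs_pos l); lra. }
  pose proof (Rmin_l (Rmin d1 (k / (Rabs l + 1))) (t - a)). pose proof (Rmin_r (Rmin d1 (k / (Rabs l + 1))) (t - a)).
  pose proof (Rmin_l d1 (k / (Rabs l + 1))). pose proof (Rmin_r d1 (k / (Rabs l + 1))).
  assert (Hs1 : a < s < t) by (unfold s; lra).
  assert (Hgs : Rabs (g s) < k) by (replace (g s) with (g s - 0) by ring; apply Hg1; unfold s; lra).
  assert (Hls : Rabs l * (s - a) <= k).
  { assert (s - a <= k / (Rabs l + 1)) by (unfold s; lra).
    assert (HH : Rabs l * (s - a) <= (Rabs l + 1) * (k / (Rabs l + 1))).
    { apply Rmult_le_compat; try lra; try apply Rabs_pos. }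
    replace ((Rabs l + 1) * (k / (Rabs l + 1))) with k in HH by (field; pose proof (Rabs_pos l); lra). lra. }
  destruct (MVT_gen g s t dg) as [c [Hc Heq]].
  - intros x Hx. rewrite Rmin_left in Hx by lra. rewrite Rmax_right in Hx by lra. apply Hd. lra.
  - intros x Hx. rewrite Rmin_left in Hx by lra. rewrite Rmax_right in Hx by lra.
    apply continuity_pt_filterlim. apply (ex_derive_continuous (K:=R_AbsRing) (V:=R_NormedModule) g). eexists. apply Hd. lra.
  - rewrite Rmin_left in Hc by lra. rewrite Rmax_right in Hc by lra.
    assert (Hdc : Rabs (dg c - l) < e / 4) by (apply Hdd; lra).
    assert (Hm : Rabs (g t - g s - l * (t - s)) <= e / 4 * (t - a)).
    { rewrite Heq. replace (dg c * (t - s) - l * (t - s)) with ((dg c - l) * (t - s)) by ring.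
      rewrite Rabs_mult, (Rabs_right (t - s)) by lra.
      apply Rle_trans with (e / 4 * (t - s)); [apply Rmult_le_compat_r; lra|]. apply Rmult_le_compat_l; lra. }
    assert (Hm2 : Rabs (g t - l * (t - a)) <= 3 * k).
    { replace (g t - l * (t - a)) with ((g t - g s - l * (t - s)) + g s - l * (s - a)) by ring.
      eapply Rle_trans; [apply Rabs_triang|].
      eapply Rle_trans; [apply Rplus_le_compat_l; rewrite Rabs_Ropp, Rabs_mult, (Rabs_right (s - a)) by lra; apply Rle_refl|].
      eapply Rle_trans; [apply Rplus_le_compat_r; apply Rabs_triang|]. fold k in Hm. lra. }
    replace (g t / (t - a) - l) with ((g t - l * (t - a)) / (t - a)) by (field; lra).
    unfold Rdiv. rewrite Rabs_mult, Rabs_inv, (Rabs_right (t - a)) by lra.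
    apply Rle_lt_trans with (3 * k * / (t - a)).
    + apply Rmult_le_compat_r; auto. left; apply Rinv_0_lt_compat; lra.
    + unfold k. replace (3 * (e / 4 * (t - a)) * / (t - a)) with (3 * e / 4) by (field; lra). lra.
Qed.

Lemma at_right_ev (a b : R) (P : R -> Prop) : a < b -> (forall t, a < t <= b -> P t) -> at_right a P.
Proof.
  intros Hab H. assert (Hp : 0 < b - a) by lra. exists (mkposreal (b - a) Hp). intros x Hb Hx.
  unfold ball in Hb; simpl in Hb; unfold AbsRing_ball, abs, minus, plus, opp in Hb; simpl in Hb.
  apply H. rewrite Rabs_right in Hb; lra.
Qed.

Lemma ln_sqrt' x : 0 < x -> ln (sqrt x) = / 2 * ln x.
Proof. intros. rewrite <- Rpower_sqrt by auto. unfold Rpower. apply ln_exp. Qed.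

Lemma asym (delta : R -> R) a b r H : a < b -> solI delta a b r ->
  (forall t, a < t <= b -> 0 < Derive r t) ->
  filterlim r (at_right a) (locally 0) -> filterlim (energy r) (at_right a) (locally H) ->
  filterlim (fun t => r t / Rpower (t - a) (2 / 3)) (at_right a) (locally (Rpower (9 / 2) (1 / 3))).
Proof.
  intros Hab Hs Hpos Hr0 Hh.
  set (l := 3 / 2 * sqrt 2).
  assert (Hs2 : 0 < sqrt 2) by (apply sqrt_lt_R0; lra).
  assert (Hl : 0 < l) by (unfold l; lra).
  assert (Hprod : filterlim (fun t => energy r t * r t) (at_right a) (locally (H * 0))).
  { apply (filterlim_comp_2 (F:=at_right a) (energy r) r Rmult Hh Hr0). apply (filterlim_mult (K:=R_AbsRing) H 0). }
  rewrite Rmult_0_r in Hprod.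
  assert (Hphi : filterlim (fun u => 3 / 2 * sqrt (2 * u + 2)) (locally 0) (locally l)).
  { replace l with (3 / 2 * sqrt (2 * 0 + 2)) by (unfold l; f_equal; f_equal; ring).
    apply (ex_derive_continuous (K:=R_AbsRing) (V:=R_NormedModule) (fun u => 3 / 2 * sqrt (2 * u + 2))).
    auto_derive. lra. }
  assert (Hw : filterlim (fun t => 3 / 2 * (Derive r t * sqrt (r t))) (at_right a) (locally l)).
  { apply (filterlim_ext_loc (fun t => 3 / 2 * sqrt (2 * (energy r t * r t) + 2))).
    - apply (at_right_ev a b); auto. intros t Ht. destruct (Hs t Ht) as [Hrt _]. pose proof (Hpos t Ht).
      f_equal. assert (Hsq : sqrt (r t) * sqrt (r t) = r t) by (apply sqrt_sqrt; lra).
      assert (0 <= sqrt (r t)) by apply sqrt_pos.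
      rewrite <- (sqrt_square (Derive r t * sqrt (r t))) by nra. f_equal.
      replace (Derive r t * sqrt (r t) * (Derive r t * sqrt (r t))) with (Derive r t * Derive r t * (sqrt (r t) * sqrt (r t))) by ring.
      rewrite Hsq. unfold energy. field. lra.
    - exact (filterlim_comp _ _ _ _ _ _ _ _ Hprod Hphi). }
  assert (Hg0 : filterlim (fun t => r t * sqrt (r t)) (at_right a) (locally 0)).
  { apply at_right_intro. intros e He.
    destruct (at_right_eps r a 0 Hr0 (Rmin e 1)) as [d [Hd Hx]]; [apply Rmin_pos; lra|].
    exists (Rmin d (b - a)). split; [apply Rmin_pos; lra|]. intros x Hx'.
    pose proof (Rmin_l d (b - a)). pose proof (Rmin_r d (b - a)). pose proof (Rmin_l e 1). pose proof (Rmin_r e 1).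
    destruct (Hs x ltac:(lra)) as [Hrx _]. specialize (Hx x ltac:(lra)).
    rewrite Rminus_0_r, Rabs_right in Hx by lra.
    assert (sqrt (r x) <= 1) by (rewrite <- sqrt_1; apply sqrt_le_1_alt; lra).
    assert (0 <= sqrt (r x)) by apply sqrt_pos.
    rewrite Rminus_0_r, Rabs_right by nra. nra. }
  assert (Hq : filterlim (fun t => r t * sqrt (r t) / (t - a)) (at_right a) (locally l)).
  { apply (lhop (fun t => r t * sqrt (r t)) (fun t => 3 / 2 * (Derive r t * sqrt (r t))) a b l Hab); auto.
    intros x Hx. destruct (Hs x Hx) as [Hrx [H1 _]]. auto_derive.
    - repeat split; try (eexists; eauto); lra.
    - replace (Derive (fun x => r x) x) with (Derive r x) by (symmetry; apply is_derive_unique; auto).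
      assert (Hsq : sqrt (r x) * sqrt (r x) = r x) by (apply sqrt_sqrt; lra).
      assert (0 < sqrt (r x)) by (apply sqrt_lt_R0; lra).
      rewrite <- Hsq at 2. field. lra. }
  assert (Hpsi : filterlim (fun u => exp (2 / 3 * ln u)) (locally l) (locally (Rpower (9 / 2) (1 / 3)))).
  { replace (Rpower (9 / 2) (1 / 3)) with (exp (2 / 3 * ln l)).
    - apply (ex_derive_continuous (K:=R_AbsRing) (V:=R_NormedModule) (fun u => exp (2 / 3 * ln u))).
      auto_derive. auto.
    - assert (Hll : 9 / 2 = l * l).
      { unfold l. assert (Q : sqrt 2 * sqrt 2 = 2) by (apply sqrt_sqrt; lra). nra. }
      unfold Rpower. f_equal. rewrite Hll. rewrite ln_mult by auto. field. }
  apply (filterlim_ext_loc (fun t => exp (2 / 3 * ln (r t * sqrt (r t) / (t - a))))).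
  - apply (at_right_ev a b); auto. intros t Ht. destruct (Hs t Ht) as [Hrt _].
    assert (0 < sqrt (r t)) by (apply sqrt_lt_R0; lra).
    unfold Rdiv. rewrite ln_mult, ln_mult, ln_Rinv, ln_sqrt'; try lra;
      try (apply Rinv_0_lt_compat; lra); try (apply Rmult_lt_0_compat; auto).
    unfold Rpower. rewrite <- exp_Ropp.
    transitivity (exp (ln (r t)) * exp (- (2 / 3 * ln (t - a)))).
    + rewrite <- exp_plus. f_equal. field.
    + rewrite exp_ln by auto. reflexivity.
  - exact (filterlim_comp _ _ _ _ _ _ _ _ Hq Hpsi).
Qed.

Theorem lemma8p1
  (delta : R -> R)
  (delta_nonneg : forall x : R, 0 < x -> 0 <= delta x)
  (delta_bounded : exists M : R, forall x : R, 0 < x -> Rabs (delta x) <= M)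
  (delta_C1 : forall x : R, 0 < x -> ex_derive delta x /\ continuous (Derive delta) x)
  (alpha : R) (omega : Rbar) (r : R -> R)
  (Hint : Rbar_lt alpha omega)
  (Hsol : is_sol delta alpha omega r)
  (Hmaxl : maximal_left delta alpha omega r)
  (Hmaxr : maximal_right delta alpha omega r) :
  filterlim r (at_right alpha) (locally 0) /\
  (exists L : R, filterlim (energy r) (at_right alpha) (locally L)) /\
  filterlim (fun t => r t / Rpower (t - alpha) (2 / 3)) (at_right alpha)
    (locally (Rpower (9 / 2) (1 / 3))).
Proof.
  pose proof delta_bounded as [M HM].
  assert (Hd : forall x, 0 < x -> 0 <= delta x <= M).
  { intros x Hx. pose proof (delta_nonneg x Hx). pose proof (HM x Hx). pose proof (Rle_abs (delta x)). lra. }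
  assert (Hdd : forall x, 0 < x -> ex_derive delta x) by (intros; apply delta_C1; auto).
  assert (Hb : exists b, alpha < b /\ Rbar_lt b omega).
  { destruct omega as [w| |]; simpl in Hint.
    - exists ((alpha + w) / 2). simpl. split; lra.
    - exists (alpha + 1). simpl. split; [lra|auto].
    - contradiction. }
  destruct Hb as [b [Hab Hbw]].
  assert (Hs : solI delta alpha b r).
  { intros t Ht. assert (Htw : Rbar_lt t omega) by (eapply Rbar_le_lt_trans; [|exact Hbw]; simpl; lra).
    destruct (Hsol t ltac:(simpl; lra) Htw) as [H0 [H1 [H2 H3]]].
    split; [auto|split].
    - apply Derive_correct; auto.
    - replace (- 1 / r t ^ 2 - delta (r t) * Derive r t) with (Derive (Derive r) t) by lra.
      apply Derive_correct; auto. }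
  assert (Hsub : forall c, c <= b -> solI delta alpha c r) by (intros c Hc t Ht; apply Hs; lra).
  set (t0 := (alpha + b) / 2).
  assert (Ht0 : alpha < t0 < b) by (unfold t0; lra).
  assert (Ht0w : forall t, t <= b -> Rbar_lt t omega) by (intros t Ht; eapply Rbar_le_lt_trans; [|exact Hbw]; simpl; lra).
  destruct (classic (exists t1, alpha < t1 <= t0 /\ 0 < Derive r t1)) as [[t1 [Ht1 Hpos1]]|Hneg].
  2:{ exfalso. destruct (caseB_box delta M alpha t0 r Hd ltac:(lra) (Hsub t0 ltac:(lra))) as [c [C [Bd [Hc Hbox]]]].
      - intros t Ht. destruct (Rle_dec (Derive r t) 0); auto. exfalso. apply Hneg. exists t. split; auto. lra.
      - apply (ext_contra delta delta_bounded delta_C1 alpha omega r Hsol Hmaxl t0 c C Bd); auto; try lra.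
        apply Ht0w; lra. }
  assert (Hpos : forall t, alpha < t <= t1 -> 0 < Derive r t).
  { intros t Ht. apply (caseA_pos delta alpha b r Hdd Hs t1); auto. lra. }
  assert (Hs1 : solI delta alpha t1 r) by (apply Hsub; lra).
  assert (Hinc : forall x y, alpha < x -> x <= y -> y <= t1 -> r x <= r y).
  { intros x y Hx Hxy Hy. apply (nondecr2 r (Derive r) alpha t1); auto.
    - intros u Hu. apply Hs1; auto.
    - intros u Hu. pose proof (Hpos u Hu). lra. }
  assert (Hsmall : forall eps, 0 < eps -> exists t, alpha < t <= t1 /\ r t < eps).
  { intros eps Heps. apply NNPP. intros Hn.
    assert (Hge : forall t, alpha < t <= t1 -> eps <= r t).
    { intros t Ht. destruct (Rle_dec eps (r t)); auto. exfalso. apply Hn. exists t. split; auto. lra. }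
    destruct (caseA_box delta M alpha t1 r Hd ltac:(lra) Hs1 Hpos eps Heps Hge) as [C [Bd Hbox]].
    apply (ext_contra delta delta_bounded delta_C1 alpha omega r Hsol Hmaxl t1 eps C Bd); auto; try lra.
    apply Ht0w; lra. }
  assert (Hr0 : filterlim r (at_right alpha) (locally 0)).
  { apply at_right_intro. intros e He. destruct (Hsmall e He) as [t [Ht Hrt]].
    exists (t - alpha). split; [lra|]. intros x Hx.
    destruct (Hs1 x ltac:(lra)) as [Hrx _]. assert (r x <= r t) by (apply Hinc; lra).
    rewrite Rminus_0_r, Rabs_right; lra. }
  destruct (energy_bounded delta M alpha t1 r Hd ltac:(lra) Hs1 Hpos) as [K HK].
  destruct (mono_lim (energy r) alpha t1 K ltac:(lra) (energy_nonincr delta alpha t1 r delta_nonneg Hs1) HK) as [L HL].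
  split; [exact Hr0|split; [exists L; exact HL|]].
  apply (asym delta alpha t1 r L); auto. lra.
Qed.
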